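(* Let $\mathcal N=(Q,\Sigma,\delta,I,F)$ be an NFA with $L=\mathcal L(\mathcal N)$. The following are equivalent: (a) $\mathsf G^r(\mathcal N)$ is the minimal DFA for $L$; (b) $\sim^r_{\mathcal N}=\sim^r_L$; (c) for all $u,v\in\Sigma^*$, $W^{\mathcal N}_{\mathrm{post}^{\mathcal N}_u(I),F}=W^{\mathcal N}_{\mathrm{post}^{\mathcal N}_v(I),F}\iff\mathrm{post}^{\mathcal N}_u(I)=\mathrm{post}^{\mathcal N}_v(I)$; (d) for all $q\in Q$, $P_{\sim^r_L}(W^{\mathcal N}_{I,q})=W^{\mathcal N}_{I,q}$; (e) $\mathcal N^R$ is atomic.
   Context: NFA $\mathcal N=(Q,\Sigma,\delta,I,F)$ with $\delta:Q\times\Sigma\to\wp(Q)$ extended to words by $\hat\delta$; $W^{\mathcal N}_{S,T}=\{w\mid\exists q\in S,q'\in T:q'\in\hat\delta(q,w)\}$ (singletons without braces); $\mathrm{post}^{\mathcal N}_w(S)=\{q\mid w\in W^{\mathcal N}_{S,q}\}$; $\mathcal L(\mathcal N)=W^{\mathcal N}_{I,F}$. Reverse $\mathcal N^R=(Q,\Sigma,\delta_r,F,I)$ with $q\in\delta_r(q',a)$ iff $q'\in\delta(q,a)$. $u\sim^r_L v\iff u^{-1}L=v^{-1}L$ with $u^{-1}L=\{x\mid ux\in L\}$; $u\sim^r_{\mathcal N}v\iff\mathrm{post}^{\mathcal N}_u(I)=\mathrm{post}^{\mathcal N}_v(I)$. For an equivalence $\sim$, $P_\sim(S)=\bigcup_{u\in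 S}\{v\mid u\sim v\}$. $\mathsf G^r(\mathcal N)$ is the DFA with states the classes of $\sim^r_{\mathcal N}$, initial state the class of $\varepsilon$, final states the classes of words of $L$, transition from the class of $u$ on $a$ to the class of $ua$ (isomorphic to the reachable subset construction $\mathcal N^D$). For a regular language $K$ with distinct left quotients $K_0,\dots,K_{n-1}$, an atom of $K$ is a nonempty intersection $\widetilde K_0\cap\dots\cap\widetilde K_{n-1}$ with $\widetilde K_i\in\{K_i,K_i^c\}$; an NFA is atomic if the right language $W_{q,F}$ of each of its states is a union of atoms of its language. The minimal DFA is the unique (up to isomorphism) complete DFA with fewest states for $L$. *)

(* Defs.v *)
From HB Require Import structures.
From mathcomp Require Import all_boot.
Set Implicit Arguments. Unset Strict Implicit. Unset Printing Implicit Defensive.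

Definition lang (S : Type) := seq S -> Prop.
Definition lang_eq (S : Type) (A B : lang S) := forall w, A w <-> B w.

Record nfa (Q S : finType) := NFA {
  ntrans : Q -> S -> {set Q};
  ninit : {set Q};
  nfinal : {set Q} }.

Section NFA.
Variables (Q S : finType).
Implicit Types (N : nfa Q S) (A B : {set Q}) (w u v : seq S).

Fixpoint dhat N (q : Q) w : {set Q} :=
  match w with
  | [::] => [set q]
  | a :: w' => \bigcup_(p in ntrans N q a) dhat N p w'
  end.

Definition W N A B : pred (seq S) :=
  fun w => [exists q in A, [exists q' in B, q' \in dhat N q w]].

Definition post N w A : {set Q} := [set q | W N A [set q] w].

Definition nlang N : lang S := fun w => W N (ninit N) (nfinal N) w.

Definition nrev N : nfa Q S :=
  NFA (fun q' a => [set q | q' \in ntrans N q a]) (nfinal N) (ninit N).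

Definition nfa_req N u v : Prop := post N u (ninit N) = post N v (ninit N).

End NFA.

Section Lang.
Variable (S : Type).
Implicit Types (L K : lang S) (u v : seq S).

Definition lang_req L u v : Prop := forall x, L (u ++ x) <-> L (v ++ x).

Definition Pclos (sim : seq S -> seq S -> Prop) (X : lang S) : lang S :=
  fun v => exists2 u, X u & sim u v.

(* An atom of K: a nonempty intersection, over all left quotients u^{-1}K,
   of either the quotient or its complement (a choice c u for each u;
   repeated quotients are harmless). *)
Definition is_atom K (A : lang S) : Prop :=
  (exists w, A w) /\
  exists c : seq S -> bool, forall w, A w <-> (forall u, K (u ++ w) <-> c u).

Definition union_of_atoms K (X : lang S) : Prop :=
  exists Atoms : lang S -> Prop,
    (forall A, Atoms A -> is_atom K A) /\
    (forall w, X w <-> exists2 A, Atoms A & A w).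

End Lang.

Definition atomic (Q S : finType) (N : nfa Q S) : Prop :=
  forall q : Q, union_of_atoms (nlang N) (fun w => W N [set q] (nfinal N) w).

Record dfa (S : finType) := DFA {
  dstate : finType;
  dinit : dstate;
  dtrans : dstate -> S -> dstate;
  dfinal : pred dstate }.

Definition dfa_lang (S : finType) (D : dfa S) : lang S :=
  fun w => @dfinal S D (foldl (@dtrans S D) (@dinit S D) w).

Definition minimal_dfa (S : finType) (D : dfa S) (L : lang S) : Prop :=
  lang_eq (dfa_lang D) L /\
  forall D' : dfa S, lang_eq (dfa_lang D') L -> #|dstate D| <= #|dstate D'|.

(* G^r(N): realised (up to isomorphism) as the reachable subset construction;
   the class of u is represented by post_u(I). *)
Section Gr.
Variables (Q S : finType) (N : nfa Q S).

Definition gr_step (A B : {set Q}) : bool := [exists a, B == post N [:: a] A].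
Definition gr_reach (A : {set Q}) : bool := connect gr_step (post N [::] (ninit N)) A.

Definition gr_state : finType := {A : {set Q} | gr_reach A}.

Lemma gr_reach_step (A : {set Q}) (a : S) :
  gr_reach A -> gr_reach (post N [:: a] A).
Proof.
move=> h; apply: connect_trans h (connect1 _).
by apply/existsP; exists a.
Qed.

Definition gr_init : gr_state := exist _ (post N [::] (ninit N)) (connect0 _ _).
Definition gr_trans (A : gr_state) (a : S) : gr_state :=
  exist _ (post N [:: a] (val A)) (gr_reach_step a (valP A)).
Definition gr_final : pred gr_state :=
  fun A => [exists q in val A, q \in nfinal N].

Definition Gr : dfa S := DFA gr_init gr_trans gr_final.
End Gr.

(* Main.v *)
Require Import Defs.
From Stdlib Require Import ClassicalEpsilon.
From mathcomp Require Import all_boot.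
Set Implicit Arguments. Unset Strict Implicit. Unset Printing Implicit Defensive.

Section Basics.
Variables (Q S : finType) (N : nfa Q S).
Implicit Types (A B : {set Q}) (u v w x : seq S).

Lemma mem_dhat_cat q u v (x : Q) :
  (x \in dhat N q (u ++ v)) = [exists p, (p \in dhat N q u) && (x \in dhat N p v)].
Proof.
elim: u q => [|a u IH] q /=.
  apply/idP/existsP => [h|[p /andP[]]]; first by exists q; rewrite set11.
  by rewrite inE => /eqP ->.
apply/bigcupP/existsP => [[p hp]|[r /andP[/bigcupP[p hp hr] hx]]].
  rewrite IH => /existsP[r /andP[h1 h2]]; exists r; rewrite h2 andbT.
  by apply/bigcupP; exists p.
by exists p => //; rewrite IH; apply/existsP; exists r; rewrite hr.
Qed.

Lemma memW A B w : W N A B w = [exists q in A, [exists q' in B, q' \in dhat N q w]].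
Proof. by []. Qed.

Lemma mem_post A w q : (q \in post N w A) = [exists p in A, q \in dhat N p w].
Proof.
rewrite inE /W; apply/existsP/existsP => [[p /andP[hp /existsP[q' /andP[]]]]|[p /andP[hp h]]].
  by rewrite inE => /eqP -> h; exists p; rewrite hp.
by exists p; rewrite hp; apply/existsP; exists q; rewrite set11.
Qed.

Lemma W_post A B w : W N A B w = [exists q in post N w A, q \in B].
Proof.
apply/existsP/existsP => [[p /andP[hp /existsP[q /andP[hq h]]]]|[q /andP[hq hB]]].
  by exists q; rewrite hq andbT mem_post; apply/existsP; exists p; rewrite hp.
move: hq; rewrite mem_post => /existsP[p /andP[hp h]].
by exists p; rewrite hp; apply/existsP; exists q; rewrite hB.
Qed.

Lemma post_cat A u v : post N (u ++ v) A = post N v (post N u A).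
Proof.
apply/setP => q; rewrite !mem_post.
apply/existsP/existsP => [[p /andP[hp]]|[r /andP[]]].
  rewrite mem_dhat_cat => /existsP[r /andP[h1 h2]].
  by exists r; rewrite h2 andbT mem_post; apply/existsP; exists p; rewrite hp.
rewrite mem_post => /existsP[p /andP[hp h1]] h2.
by exists p; rewrite hp mem_dhat_cat; apply/existsP; exists r; rewrite h1.
Qed.

Lemma post_nil A : post N [::] A = A.
Proof.
apply/setP => q; rewrite mem_post; apply/existsP/idP => [[p /andP[hp]]|h].
  by rewrite inE => /eqP ->.
by exists q; rewrite h set11.
Qed.

Lemma W_cat A B u v : W N A B (u ++ v) = W N (post N u A) B v.
Proof. by rewrite !W_post post_cat. Qed.

Lemma mem_dhat_rev q q' w :
  (q' \in dhat (nrev N) q w) = (q \in dhat N q' (rev w)).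
Proof.
elim: w q q' => [|a w IH] q q' /=; first by rewrite !inE eq_sym.
rewrite rev_cons -cats1 mem_dhat_cat.
apply/bigcupP/existsP => [[p hp]|[p /andP[h1 h2]]].
  rewrite IH => h; exists p; rewrite h /=; move: hp; rewrite inE => hp.
  by apply/bigcupP; exists q => //; rewrite inE.
exists p; last by rewrite IH.
rewrite inE; move: h2 => /= /bigcupP[r hr]; rewrite inE. by move=> /eqP ->.
Qed.

Lemma W_rev A B w : W (nrev N) A B w = W N B A (rev w).
Proof.
apply/existsP/existsP => [[p /andP[hp /existsP[q /andP[hq h]]]]|[q /andP[hq /existsP[p /andP[hp h]]]]].
  by exists q; rewrite hq; apply/existsP; exists p; rewrite hp -mem_dhat_rev.
by exists p; rewrite hp; apply/existsP; exists q; rewrite hq mem_dhat_rev.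
Qed.

End Basics.

Section Main.
Variables (Q S : finType) (N : nfa Q S).
Implicit Types (u v w x : seq S).
Local Notation P u := (post N u (ninit N)).
Local Notation L := (nlang N).
Local Notation F := (nfinal N).
Definition Ccond := forall u v, lang_req L u v -> P u = P v.

Lemma L_cat u x : L (u ++ x) <-> W N (P u) F x.
Proof. by rewrite /nlang W_cat. Qed.

Lemma req_eq u v : lang_req L u v <-> lang_eq (fun w => W N (P u) F w) (fun w => W N (P v) F w).
Proof.
split=> h x; move: (h x); by rewrite !L_cat.
Qed.

Lemma req_of_eq u v : P u = P v -> lang_req L u v.
Proof. by move=> e; apply/req_eq => x; rewrite e. Qed.

Lemma b_C : (forall u v, nfa_req N u v <-> lang_req L u v) <-> Ccond.
Proof.
split=> [h u v /h //|h u v]; split; [exact: req_of_eq | exact: h].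
Qed.

Lemma c_C : (forall u v, lang_eq (fun w => W N (P u) F w) (fun w => W N (P v) F w)
                 <-> P u = P v) <-> Ccond.
Proof.
split=> [h u v /req_eq /h //|h u v]; split.
  by move=> /req_eq; apply: h.
by move=> /req_of_eq /req_eq.
Qed.

Lemma memP_W q u : W N (ninit N) [set q] u = (q \in P u).
Proof. by rewrite inE. Qed.

Lemma req_sym u v : lang_req L u v -> lang_req L v u.
Proof. by move=> h x; split => /(h x). Qed.

Lemma d_C : (forall q : Q,
          lang_eq (Pclos (lang_req L) (fun w => W N (ninit N) [set q] w))
                  (fun w => W N (ninit N) [set q] w)) <-> Ccond.
Proof.
split=> [h u v huv|h q w]; last first.
  split=> [[u hu huw]|hw]; last by exists w.
  by move: hu; rewrite !memP_W (h _ _ huw).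
apply/setP => q; apply/idP/idP => hq.
  by rewrite -memP_W; apply/(h q); exists u => //; rewrite memP_W.
by rewrite -memP_W; apply/(h q); exists v; rewrite ?memP_W //; apply: req_sym.
Qed.

Lemma LR_cat u w : nlang (nrev N) (u ++ w) <-> L (rev w ++ rev u).
Proof. by rewrite /nlang W_rev rev_cat. Qed.

Lemma e_C : atomic (nrev N) <-> Ccond.
Proof.
split=> [h u v huv|h q].
  apply/setP=> q.
  have key : forall u v, lang_req L u v -> q \in P u -> q \in P v.
    move=> {}u {}v {}huv hq.
    have [At [hAt hX]] := h q.
    have := proj1 (hX (rev u)); rewrite /= W_rev revK memP_W => /(_ hq) [A hA hAw].
    have [_ [c hc]] := hAt A hA.
    have : A (rev v).
      move/hc: hAw => hAw; apply/hc => u'; rewrite -(hAw u').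
      by rewrite !LR_cat !revK; split => /huv.
    by move=> hAv; have := proj2 (hX (rev v)) (ex_intro2 _ _ A hA hAv); rewrite /= W_rev revK memP_W.
  by apply/idP/idP; apply: key => //; apply: req_sym.
exists (fun A => exists2 w0, q \in P (rev w0) &
          forall w, A w <-> (forall u, nlang (nrev N) (u ++ w) <-> nlang (nrev N) (u ++ w0))).
split.
  move=> A [w0 hw0 hA]; split; first by exists w0; apply/hA.
  by exists (fun u => W (nrev N) (nfinal N) (ninit N) (u ++ w0)) => w; apply: hA.
move=> w /=; rewrite W_rev memP_W; split => [hw|[A [w0 hw0 hA] hAw]].
  by exists (fun w' => forall u, nlang (nrev N) (u ++ w') <-> nlang (nrev N) (u ++ w)) => //; exists w.
have /h <- // : lang_req L (rev w0) (rev w).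
move/hA: hAw => e x; have := e (rev x); rewrite !LR_cat revK => e'; split => /e' //.
Qed.

Local Notation G := (gr_state N).

Lemma gr_fold (A : G) w : val (foldl (@gr_trans _ _ N) A w) = post N w (val A).
Proof.
elim: w A => [|a w IH] A /=; first by rewrite post_nil.
by rewrite IH /= -post_cat.
Qed.

Lemma gr_final_W (A : G) : gr_final A = W N (val A) F [::].
Proof. by rewrite W_post post_nil. Qed.

Lemma gr_state_of w : val (foldl (@gr_trans _ _ N) (gr_init N) w) = P w.
Proof. by rewrite gr_fold /= -post_cat. Qed.

Lemma gr_lang : lang_eq (dfa_lang (Gr N)) L.
Proof.
move=> w; have := L_cat w [::]; rewrite cats0 => ->.
by rewrite /dfa_lang /= gr_final_W gr_state_of.
Qed.

Lemma reach_ex (A : G) : exists u, P u == val A.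
Proof.
case: A => A /= /connectP [p hp ->].
suff: forall u p, path (gr_step N) (P u) p -> exists u', P u' == last (P u) p.
  by move=> /(_ [::] p hp).
clear hp; move=> u {}p; elim: p u => [|B p IH] u /=; first by exists u.
move=> /andP[/existsP[a /eqP ->] hp'].
by rewrite -post_cat in hp' *; exact: IH hp'.
Qed.

Definition eqL (A B : G) : bool :=
  if excluded_middle_informative (forall w, W N (val A) F w = W N (val B) F w)
  then true else false.

Lemma eqLP A B : reflect (forall w, W N (val A) F w = W N (val B) F w) (eqL A B).
Proof. by rewrite /eqL; case: excluded_middle_informative => h; constructor. Qed.

Lemma eqL_refl A : eqL A A. Proof. by apply/eqLP. Qed.
Lemma eqL_sym A B : eqL A B -> eqL B A.
Proof. by move/eqLP=> h; apply/eqLP => w; rewrite h. Qed.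
Lemma eqL_trans A B C : eqL A B -> eqL B C -> eqL A C.
Proof. by move/eqLP=> h1 /eqLP h2; apply/eqLP => w; rewrite h1 h2. Qed.

Definition rep (A : G) : G := odflt A [pick B | eqL B A].

Lemma rep_eqL A : eqL (rep A) A.
Proof. rewrite /rep; case: pickP => [x hx|_] //=; exact: eqL_refl. Qed.

Lemma rep_eq A B : eqL A B -> rep A = rep B.
Proof.
move=> hAB; rewrite /rep (@eq_pick _ (fun C => eqL C A) (fun C => eqL C B)); last first.
  move=> C; apply/idP/idP => h; [exact: eqL_trans h hAB | exact: eqL_trans h (eqL_sym hAB)].
by case: pickP => //= H; have := H B; rewrite eqL_refl.
Qed.

Lemma rep_idem A : rep (rep A) == rep A.
Proof. by apply/eqP; apply: rep_eq; exact: rep_eqL. Qed.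

Lemma eqL_tr A B a : eqL A B -> eqL (gr_trans A a) (gr_trans B a).
Proof. by move/eqLP=> h; apply/eqLP => w /=; rewrite -!W_cat. Qed.

Local Notation T0 := {A : G | rep A == A}.
Definition tr0 (X : T0) a : T0 := exist _ (rep (gr_trans (val X) a)) (rep_idem _).
Definition init0 : T0 := exist _ (rep (gr_init N)) (rep_idem _).
Definition D0 : dfa S := @DFA S _ init0 tr0 (fun X : T0 => gr_final (val X)).

Lemma fold0 (X : T0) (A : G) w :
  eqL (val X) A -> eqL (val (foldl tr0 X w)) (foldl (@gr_trans _ _ N) A w).
Proof.
elim: w X A => [|a w IH] X A //= h; apply: IH => /=.
exact: eqL_trans (rep_eqL _) (eqL_tr a h).
Qed.

Lemma gr_final_eqL A B : eqL A B -> gr_final A = gr_final B.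
Proof. by move/eqLP=> h; rewrite !gr_final_W h. Qed.

Lemma D0_lang : lang_eq (dfa_lang D0) L.
Proof.
move=> w; apply: iff_trans (gr_lang w); rewrite /dfa_lang /=.
by rewrite (gr_final_eqL (@fold0 init0 (gr_init N) w (rep_eqL _))).
Qed.

Lemma a_C : minimal_dfa (Gr N) L <-> Ccond.
Proof.
split=> [[hlang hmin]|h].
  have hc := hmin D0 D0_lang.
  have onto := @inj_card_onto T0 G val val_inj hc.
  have repid A : rep A = A.
    by have /codomP [X ->] := onto A; exact: (eqP (valP X)).
  move=> u v huv; rewrite -!gr_state_of; congr val.
  rewrite -(repid (foldl _ _ u)) -(repid (foldl _ _ v)); apply: rep_eq.
  apply/eqLP => w; rewrite !gr_state_of.
  by have [h1 h2] := proj1 (req_eq u v) huv w; apply/idP/idP.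
split; first exact: gr_lang.
move=> D' hD'.
pose f (A : G) := foldl (@dtrans S D') (@dinit S D') (xchoose (reach_ex A)).
suff: injective f by move/leq_card.
move=> A B e.
have hA := xchooseP (reach_ex A); have hB := xchooseP (reach_ex B).
apply: val_inj; rewrite -(eqP hA) -(eqP hB); apply: h => x.
have e' : foldl (@dtrans S D') (@dinit S D') (xchoose (reach_ex A))
        = foldl (@dtrans S D') (@dinit S D') (xchoose (reach_ex B)) := e.
split=> /hD' hx; apply/hD'; move: hx; by rewrite /dfa_lang !foldl_cat e'.
Qed.

End Main.

Theorem corollary1 (Q S : finType) (N : nfa Q S) :
  [<-> minimal_dfa (Gr N) (nlang N);
       (forall u v : seq S, nfa_req N u v <-> lang_req (nlang N) u v);
       (forall u v : seq S,
          lang_eq (fun w => W N (post N u (ninit N)) (nfinal N) w)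
                  (fun w => W N (post N v (ninit N)) (nfinal N) w)
          <-> post N u (ninit N) = post N v (ninit N));
       (forall q : Q,
          lang_eq (Pclos (lang_req (nlang N)) (fun w => W N (ninit N) [set q] w))
                  (fun w => W N (ninit N) [set q] w));
       atomic (nrev N)].
Proof.
tfae.
- by move/a_C/b_C.
- by move/b_C/c_C.
- by move/c_C/d_C.
- by move/d_C/e_C.
- by move/e_C/a_C.
Qed.

Print Assumptions corollary1.
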